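(* For $(\eta,\zeta,\tau)\in\mathbb R^3$ with $\tau\ne0$ let $T_1(\eta,\zeta,\tau):=\dfrac{w^3}{\tau^2}+\dfrac{27}{4}$, where $w:=(\eta+i)^2+(\zeta+i)^2$. There exists a compact set $K\subset\mathbb R^3$ such that $|T_1(\eta,\zeta,\tau)|\ge\frac{27}{8}$ for all $(\eta,\zeta,\tau)\in\mathbb R^3\setminus K$ with $\tau\neq0$. *)

(* Defs.v *)
From Stdlib Require Import Reals Lra.
Open Scope R_scope.

Definition C := (R * R)%type.
Definition Cre (z : C) : R := fst z.
Definition Cim (z : C) : R := snd z.
Definition RtoC (x : R) : C := (x, 0).
Definition Ci : C := (0, 1).
Definition Cadd (z u : C) : C := (Cre z + Cre u, Cim z + Cim u).
Definition Cmul (z u : C) : C :=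
  (Cre z * Cre u - Cim z * Cim u, Cre z * Cim u + Cim z * Cre u).
Definition Cdivr (z : C) (r : R) : C := (Cre z / r, Cim z / r).
Definition Cmod (z : C) : R := sqrt (Cre z ^ 2 + Cim z ^ 2).

Definition w_fun (eta zeta : R) : C :=
  let a := Cadd (RtoC eta) Ci in
  let b := Cadd (RtoC zeta) Ci in
  Cadd (Cmul a a) (Cmul b b).

Definition T1 (eta zeta tau : R) : C :=
  let w := w_fun eta zeta in
  Cadd (Cdivr (Cmul w (Cmul w w)) (tau ^ 2)) (RtoC (27 / 4)).

Definition R3 := (R * R * R)%type.
Definition norm3 (p : R3) : R :=
  let '(x, y, z) := p in sqrt (x ^ 2 + y ^ 2 + z ^ 2).
Definition dist3 (p q : R3) : R :=
  let '(x1, y1, z1) := p in let '(x2, y2, z2) := q in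
  sqrt ((x1 - x2) ^ 2 + (y1 - y2) ^ 2 + (z1 - z2) ^ 2).

(** Compact subsets of R^3 (Euclidean topology), via Heine–Borel:
    closed (complement open) and bounded. *)
Definition closed3 (K : R3 -> Prop) : Prop :=
  forall p, ~ K p -> exists eps, 0 < eps /\ forall q, dist3 p q < eps -> ~ K q.
Definition bounded3 (K : R3 -> Prop) : Prop :=
  exists M, forall p, K p -> norm3 p <= M.
Definition compact3 (K : R3 -> Prop) : Prop := closed3 K /\ bounded3 K.

(* Main.v *)
Require Import Defs.
From Stdlib Require Import Reals Lra Psatz.
Open Scope R_scope.

Lemma reW_eq (eta zeta tau : R) :
  Cre (T1 eta zeta tau) =
  (let a := eta^2 + zeta^2 - 2 in let b := 2*(eta+zeta) in a*(a*a - 3*(b*b))) / tau^2 + 27/4.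
Proof.
  unfold T1, w_fun, Cadd, Cdivr, Cmul, RtoC, Ci, Cre, Cim; simpl. unfold Rdiv. ring.
Qed.

Lemma poly_bound (a c : R) : -2 <= a -> 0 <= c -> c <= 8*(a+2) ->
  (26 <= a -> 0 <= a*(a*a - 3*c)) /\ (a < 26 -> -20000 <= a*(a*a-3*c)).
Proof.
  intros H1 H2 H3; split; intros H4.
  - nra.
  - destruct (Rle_lt_dec 0 a).
    + assert (a*(a*a-3*c) >= a*(a*a - 24*a - 48)) by nra.
      assert (0 <= a*((a-12)*(a-12))) by (apply Rmult_le_pos; [assumption| apply Rle_0_sqr]).
      assert (a*(a*a - 24*a - 48) >= a*(-192)) by nra.
      nra.
    + assert (a*a <= 4) by nra. assert (a*(a*a) >= a*4) by nra.
      assert (a*(3*c) <= 0) by nra. nra.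
Qed.

Lemma Cmod_ge_re (z : Defs.C) : Cre z <= Cmod z.
Proof.
  unfold Cmod. apply Rle_trans with (Rabs (Cre z)); [apply Rle_abs|].
  rewrite <- sqrt_Rsqr_abs. apply sqrt_le_1_alt. unfold Rsqr. nra.
Qed.

Definition Kbox (p : R3) : Prop :=
  let '(x, y, z) := p in Rabs x <= 6 /\ Rabs y <= 6 /\ Rabs z <= 100.

Lemma coord_le (x1 y1 z1 x2 y2 z2 : R) :
  Rabs (x1 - x2) <= dist3 (x1,y1,z1) (x2,y2,z2) /\
  Rabs (y1 - y2) <= dist3 (x1,y1,z1) (x2,y2,z2) /\
  Rabs (z1 - z2) <= dist3 (x1,y1,z1) (x2,y2,z2).
Proof.
  unfold dist3; repeat split; rewrite <- sqrt_Rsqr_abs; apply sqrt_le_1_alt;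
  unfold Rsqr; simpl;
  pose proof (Rle_0_sqr (x1-x2)); pose proof (Rle_0_sqr (y1-y2)); pose proof (Rle_0_sqr (z1-z2)); unfold Rsqr in *; lra.
Qed.

Lemma Kbox_closed : closed3 Kbox.
Proof.
  intros [[x y] z] Hn. unfold Kbox in Hn.
  destruct (Rle_lt_dec (Rabs x) 6) as [Hx|Hx];
  [destruct (Rle_lt_dec (Rabs y) 6) as [Hy|Hy];
   [destruct (Rle_lt_dec (Rabs z) 100) as [Hz|Hz]|]|].
  - exfalso; tauto.
  - exists (Rabs z - 100); split; [lra|]. intros [[x' y'] z'] Hd [_ [_ Hc]].
    destruct (coord_le x y z x' y' z') as [_ [_ H]].
    pose proof (Rabs_triang_inv z z'). lra.
  - exists (Rabs y - 6); split; [lra|]. intros [[x' y'] z'] Hd [_ [Hc _]].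
    destruct (coord_le x y z x' y' z') as [_ [H _]].
    pose proof (Rabs_triang_inv y y'). lra.
  - exists (Rabs x - 6); split; [lra|]. intros [[x' y'] z'] Hd [Hc _].
    destruct (coord_le x y z x' y' z') as [H _].
    pose proof (Rabs_triang_inv x x'). lra.
Qed.

Lemma abs_inv (x b : R) : Rabs x <= b -> -b <= x <= b.
Proof. unfold Rabs; destruct (Rcase_abs x); lra. Qed.

Lemma Kbox_bounded : bounded3 Kbox.
Proof.
  exists 200. intros [[x y] z] [Hx [Hy Hz]]. unfold norm3.
  rewrite <- (sqrt_pow2 200) by lra. apply sqrt_le_1_alt.
  apply abs_inv in Hx. apply abs_inv in Hy. apply abs_inv in Hz.
  simpl. nra.
Qed.

Theorem mainTheorem7 :
  exists K : R3 -> Prop, compact3 K /\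
    forall eta zeta tau : R, ~ K (eta, zeta, tau) -> tau <> 0 ->
      Cmod (T1 eta zeta tau) >= 27 / 8.
Proof.
  exists Kbox. split; [split; [apply Kbox_closed|apply Kbox_bounded]|].
  intros eta zeta tau HK Ht.
  apply Rle_ge. eapply Rle_trans; [|apply Cmod_ge_re]. rewrite reW_eq. cbv zeta.
  set (a := eta^2 + zeta^2 - 2). set (b := 2*(eta+zeta)).
  assert (Ha : -2 <= a) by (unfold a; nra).
  assert (Hb : b*b <= 8*(a+2)) by (unfold a, b; pose proof (Rle_0_sqr (eta-zeta)); unfold Rsqr in *; simpl; nra).
  assert (Hb0 : 0 <= b*b) by nra.
  destruct (poly_bound a (b*b) Ha Hb0 Hb) as [P1 P2].
  assert (Ht2 : 0 < tau^2) by (simpl; rewrite Rmult_1_r; apply (Rsqr_pos_lt tau Ht)).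
  destruct (Rle_lt_dec 26 a) as [H|H].
  - assert (0 <= a*(a*a-3*(b*b)) / tau^2) by (unfold Rdiv; apply Rmult_le_pos; [apply P1; lra| left; apply Rinv_0_lt_compat; lra]). lra.
  - specialize (P2 H).
    assert (Hz : 100 < Rabs tau).
    { destruct (Rle_lt_dec (Rabs tau) 100) as [Hz|Hz]; [|exact Hz]. exfalso; apply HK.
      unfold Kbox. unfold a in H.
      assert (eta^2 <= 36) by (simpl in *; nra). assert (zeta^2 <= 36) by (simpl in *; nra).
      split; [|split; [|exact Hz]]; apply Rabs_le; split; simpl in *; nra. }
    assert (Ht3 : 10000 < tau^2).
    { rewrite <- (pow2_abs tau). simpl. nra. }
    assert (a*(a*a-3*(b*b)) / tau^2 >= -27/8).
    { apply Rle_ge. apply Rmult_le_reg_r with (tau^2); [lra|].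
      replace (a*(a*a-3*(b*b)) / tau^2 * tau^2) with (a*(a*a-3*(b*b))) by (field; lra). lra. }
    lra.
Qed.
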